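(* Let $m^*\ge m_*>0$ and $K\ge1$. If $G,\tilde G\in\mathbb{R}^{n\times K}$ satisfy $m_*I_K\preceq\frac1nG^TG\preceq m^*I_K$ and $m_*I_K\preceq\frac1n\tilde G^T\tilde G\preceq m^*I_K$, then $$\|(G^TG)^{-1/2}-(\tilde G^T\tilde G)^{-1/2}\|_F\le L_1n^{-1}\|G-\tilde G\|_F,\qquad\|G(G^TG)^{-1/2}-\tilde G(\tilde G^T\tilde G)^{-1/2}\|_F\le L_2n^{-1/2}\|G-\tilde G\|_F,$$ where $L_1,L_2>0$ depend only on $(K,m_*,m^* )$.
   Context: $A^{-1/2}$ denotes the inverse of the symmetric positive definite square root of $A$; $\preceq$ is the Loewner order. *)

(* Defs.v *)
From mathcomp Require Import all_boot all_order all_algebra.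
From mathcomp Require Import reals.
Set Implicit Arguments. Unset Strict Implicit. Unset Printing Implicit Defensive.
Import Order.TTheory GRing.Theory Num.Theory.
Local Open Scope ring_scope.

Definition qform (R : realType) (k : nat) (A : 'M[R]_k) (v : 'cV[R]_k) : R :=
  (v^T *m A *m v) ord0 ord0.

Definition symmetricmx (R : realType) (k : nat) (A : 'M[R]_k) : Prop := A^T = A.

Definition psdmx (R : realType) (k : nat) (A : 'M[R]_k) : Prop :=
  symmetricmx A /\ forall v : 'cV[R]_k, 0 <= qform A v.

Definition pdmx (R : realType) (k : nat) (A : 'M[R]_k) : Prop :=
  symmetricmx A /\ forall v : 'cV[R]_k, v != 0 -> 0 < qform A v.

Definition loewner_le (R : realType) (k : nat) (A B : 'M[R]_k) : Prop :=
  psdmx (B - A).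

Definition is_spd_sqrt (R : realType) (k : nat) (A B : 'M[R]_k) : Prop :=
  pdmx B /\ B *m B = A.

Definition frob (R : realType) (m n : nat) (A : 'M[R]_(m, n)) : R :=
  Num.sqrt (\sum_(i < m) \sum_(j < n) A i j ^+ 2).

(* Main.v *)
Require Import Defs.
From mathcomp Require Import all_boot all_order all_algebra.
From mathcomp Require Import reals.
From mathcomp Require Import ring lra.
Import Order.TTheory GRing.Theory Num.Theory.
Set Implicit Arguments. Unset Strict Implicit. Unset Printing Implicit Defensive.
Local Open Scope ring_scope.

Section Aux.
Variable R : realType.

Definition dot p q (X Y : 'M[R]_(p,q)) : R := \tr (X^T *m Y).

Lemma dotE p q (X Y : 'M[R]_(p,q)) : dot X Y = \sum_(i < p) \sum_(j < q) X i j * Y i j.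
Proof.
rewrite /dot /mxtrace exchange_big /=; apply: eq_bigr => j _; rewrite !mxE.
by apply: eq_bigr => i _; rewrite mxE.
Qed.

Lemma dotC p q (X Y : 'M[R]_(p,q)) : dot X Y = dot Y X.
Proof. rewrite !dotE; apply: eq_bigr => i _; apply: eq_bigr => j _; exact: mulrC. Qed.

Lemma dot_ge0 p q (X : 'M[R]_(p,q)) : 0 <= dot X X.
Proof. rewrite dotE; apply: sumr_ge0 => i _; apply: sumr_ge0 => j _; by rewrite -expr2 sqr_ge0. Qed.

Lemma dotDr p q (X Y Z : 'M[R]_(p,q)) : dot X (Y + Z) = dot X Y + dot X Z.
Proof.
rewrite !dotE -big_split; apply: eq_bigr => i _; rewrite -big_split.
by apply: eq_bigr => j _; rewrite mxE mulrDr.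
Qed.

Lemma dotZr p q a (X Y : 'M[R]_(p,q)) : dot X (a *: Y) = a * dot X Y.
Proof.
rewrite !dotE mulr_sumr; apply: eq_bigr => i _; rewrite mulr_sumr.
by apply: eq_bigr => j _; rewrite mxE mulrCA.
Qed.

Lemma dotNr p q (X Y : 'M[R]_(p,q)) : dot X (- Y) = - dot X Y.
Proof.
rewrite !dotE -sumrN; apply: eq_bigr => i _; rewrite -sumrN.
by apply: eq_bigr => j _; rewrite mxE mulrN.
Qed.

Lemma dotDl p q (X Y Z : 'M[R]_(p,q)) : dot (Y + Z) X = dot Y X + dot Z X.
Proof. by rewrite dotC dotDr dotC (dotC X). Qed.

Lemma dotZl p q a (X Y : 'M[R]_(p,q)) : dot (a *: Y) X = a * dot Y X.
Proof. by rewrite dotC dotZr dotC. Qed.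

Lemma dotNl p q (X Y : 'M[R]_(p,q)) : dot (- X) Y = - dot X Y.
Proof. by rewrite dotC dotNr dotC. Qed.

Lemma dotNN p q (X : 'M[R]_(p,q)) : dot (- X) (- X) = dot X X.
Proof. by rewrite dotNr dotC dotNr opprK. Qed.

Lemma dot_mull p k q (M : 'M[R]_(p,k)) (X : 'M[R]_(p,q)) Y :
  dot X (M *m Y) = dot (M^T *m X) Y.
Proof. by rewrite /dot trmx_mul trmxK mulmxA. Qed.

Lemma dot_tr p q (X Y : 'M[R]_(p,q)) : dot X^T Y^T = dot X Y.
Proof. by rewrite /dot trmxK mxtrace_mulC -/(dot Y X) dotC. Qed.

Lemma dot_col p q (X Y : 'M[R]_(p,q)) :
  dot X Y = \sum_(j < q) dot (col j X) (col j Y).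
Proof.
rewrite dotE exchange_big /=; apply: eq_bigr => j _; rewrite dotE.
by apply: eq_bigr => i _; rewrite big_ord1 !mxE.
Qed.

Lemma col_mulmx p k q (M : 'M[R]_(p,k)) (X : 'M[R]_(k,q)) j :
  col j (M *m X) = M *m col j X.
Proof.
apply/matrixP => i l; rewrite !mxE; apply: eq_bigr => m _; by rewrite !mxE.
Qed.

Lemma qformE k (M : 'M[R]_k) v : qform M v = dot v (M *m v).
Proof. by rewrite /qform /dot /mxtrace big_ord1 mulmxA. Qed.

Lemma frobE p q (X : 'M[R]_(p,q)) : frob X = Num.sqrt (dot X X).
Proof.
rewrite /frob dotE; congr Num.sqrt; by under eq_bigr do under eq_bigr do rewrite expr2.
Qed.

Lemma lift_le p k (P : 'M[R]_(p,k)) (c : R) :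
  (forall v : 'cV[R]_k, dot (P *m v) (P *m v) <= c * dot v v) ->
  forall q (X : 'M[R]_(k,q)), dot (P *m X) (P *m X) <= c * dot X X.
Proof.
move=> H q X; rewrite (dot_col (P *m X)) (dot_col X) mulr_sumr.
by apply: ler_sum => j _; rewrite col_mulmx; apply: H.
Qed.

Lemma lift_ge p k (P : 'M[R]_(p,k)) (c : R) :
  (forall v : 'cV[R]_k, c * dot v v <= dot (P *m v) (P *m v)) ->
  forall q (X : 'M[R]_(k,q)), c * dot X X <= dot (P *m X) (P *m X).
Proof.
move=> H q X; rewrite (dot_col (P *m X)) (dot_col X) mulr_sumr.
by apply: ler_sum => j _; rewrite col_mulmx; apply: H.
Qed.

Lemma lift_psd k (M : 'M[R]_k) :
  (forall v : 'cV[R]_k, 0 <= dot v (M *m v)) ->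
  forall q (X : 'M[R]_(k,q)), 0 <= dot X (M *m X).
Proof.
move=> H q X; rewrite (dot_col X).
by apply: sumr_ge0 => j _; rewrite col_mulmx; apply: H.
Qed.

Lemma quad (a b c : R) :
  (forall t, 0 <= a * t ^+ 2 + 2 * b * t + c) -> 0 <= a -> b ^+ 2 <= a * c.
Proof.
move=> H a0; have c0 := H 0.
have [ae|an0] := eqVneq a 0.
  rewrite ae in H *.
  have [->|bn0] := eqVneq b 0; first by rewrite expr0n mul0r.
  have := H (- (c + 1) / (2 * b)).
  have -> : 0 * (- (c + 1) / (2 * b)) ^+ 2 + 2 * b * (- (c + 1) / (2 * b)) + c = -1.
    by field; rewrite bn0.
  by rewrite lerNr oppr0 ler10.
have ap : 0 < a by rewrite lt0r an0.
have := H (- b / a).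
have -> : a * (- b / a) ^+ 2 + 2 * b * (- b / a) + c = c - b ^+ 2 / a.
  by field.
rewrite subr_ge0 ler_pdivrMr // => h; by rewrite mulrC.
Qed.

Lemma cs_form p q (M : 'M[R]_p) (X Y : 'M[R]_(p,q)) :
  M^T = M -> (forall Z : 'M[R]_(p,q), 0 <= dot Z (M *m Z)) ->
  dot X (M *m Y) ^+ 2 <= dot X (M *m X) * dot Y (M *m Y).
Proof.
move=> sM H; apply: quad; last exact: H.
move=> t; have := H (t *: X + Y).
rewrite mulmxDr -scalemxAr dotDl !dotDr !dotZl !dotZr.
have -> : dot Y (M *m X) = dot X (M *m Y) by rewrite dot_mull sM dotC.
move=> h; apply: (le_trans h); rewrite le_eqVlt; apply/orP; left; apply/eqP; ring.
Qed.

Lemma cs p q (X Y : 'M[R]_(p,q)) : dot X Y ^+ 2 <= dot X X * dot Y Y.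
Proof.
have := @cs_form p q 1%:M X Y (trmx1 _ _).
rewrite !mul1mx; apply=> Z; rewrite mul1mx; exact: dot_ge0.
Qed.

Lemma par p q (U V : 'M[R]_(p,q)) : dot (U + V) (U + V) <= 2 * dot U U + 2 * dot V V.
Proof.
have := dot_ge0 (U - V).
rewrite !dotDl !dotDr !dotNr !dotNl opprK (dotC V U).
move=> h; lra.
Qed.


Lemma sq_le (x c : R) : 0 <= x -> 0 <= c -> x ^+ 2 <= c * x -> x <= c.
Proof. move=> x0 c0 h; nra. Qed.

Lemma sq_le2 (x k m : R) : 0 <= x -> 0 < k -> 0 <= m -> k * x ^+ 2 <= m * x -> k * x <= m.
Proof. move=> x0 k0 m0 h; nra. Qed.

Lemma sqrt_bound (x y c : R) : 0 <= c -> 0 <= y -> x <= c ^+ 2 * y ->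
  Num.sqrt x <= c * Num.sqrt y.
Proof.
move=> c0 y0 h; rewrite -{1}(ger0_norm c0) -sqrtr_sqr -sqrtrM ?sqr_ge0 //.
by rewrite ler_sqrt // mulr_ge0 // sqr_ge0.
Qed.

Lemma single n K (G : 'M[R]_(n,K)) (S : 'M[R]_K) (mlo mhi : R) :
  0 < (n%:R : R) -> 0 < mlo -> 0 < mhi ->
  loewner_le (mlo%:M) ((n%:R)^-1 *: (G^T *m G)) ->
  loewner_le ((n%:R)^-1 *: (G^T *m G)) (mhi%:M) ->
  is_spd_sqrt (G^T *m G) S ->
  S^T = S /\ S \in unitmx /\
    (forall q (X : 'M[R]_(K,q)), dot (G *m X) (G *m X) <= n%:R * mhi * dot X X) /\
    (forall q (Y : 'M[R]_(n,q)), dot (G^T *m Y) (G^T *m Y) <= n%:R * mhi * dot Y Y) /\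
    (forall q (X : 'M[R]_(K,q)),
        n%:R * mlo / Num.sqrt (n%:R * mhi) * dot X X <= dot X (S *m X)) /\
    (forall q (Y : 'M[R]_(K,q)),
        dot (invmx S *m Y) (invmx S *m Y) <= (n%:R * mlo)^-1 * dot Y Y).
Proof.
move=> n0 m0 M0 [_ Hlo] [_ Hhi] [[sS pS] SS].
have nn0 : n%:R != 0 :> R by rewrite gt_eqF.
have ninv : forall d : R, n%:R * (n%:R^-1 * d) = d.
  by move=> d; rewrite mulrA mulfV // mul1r.
set a := n%:R * mlo; set b := n%:R * mhi.
have a0 : 0 < a by rewrite mulr_gt0.
have b0 : 0 < b by rewrite mulr_gt0.
have Gv : forall v : 'cV[R]_K, dot v ((G^T *m G) *m v) = dot (G *m v) (G *m v).
  by move=> v; rewrite -mulmxA dot_mull trmxK.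
have Glo : forall v : 'cV[R]_K, a * dot v v <= dot (G *m v) (G *m v).
  move=> v; have := Hlo v; rewrite qformE mulmxBl mul_scalar_mx -scalemxAl.
  rewrite dotDr dotNr !dotZr Gv subr_ge0 => h.
  have := ler_wpM2l (ltW n0) h; rewrite ninv /a; move=> h2.
  by rewrite -mulrA.
have Ghi : forall v : 'cV[R]_K, dot (G *m v) (G *m v) <= b * dot v v.
  move=> v; have := Hhi v; rewrite qformE mulmxBl mul_scalar_mx -scalemxAl.
  rewrite dotDr dotNr !dotZr Gv subr_ge0 => h.
  have := ler_wpM2l (ltW n0) h; rewrite ninv /b; move=> h2.
  by rewrite -mulrA.
have Sv : forall v : 'cV[R]_K, dot (S *m v) (S *m v) = dot (G *m v) (G *m v).
  by move=> v; rewrite -Gv -SS -{1}sS -dot_mull mulmxA.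
have Slo : forall q (X : 'M[R]_(K,q)), a * dot X X <= dot (S *m X) (S *m X).
  by apply: lift_ge => v; rewrite Sv.
have Shi : forall q (X : 'M[R]_(K,q)), dot (S *m X) (S *m X) <= b * dot X X.
  by apply: lift_le => v; rewrite Sv.
have GhiM := lift_le Ghi.
have psdS : forall v : 'cV[R]_K, 0 <= dot v (S *m v).
  move=> v; have [->|vn] := eqVneq v 0.
    by rewrite mulmx0 dotE big1 // => i _; rewrite big1 // => j _; rewrite !mxE mul0r.
  by rewrite -qformE ltW // pS.
have psdM := lift_psd psdS.
have Su : S \in unitmx.
  rewrite unitmxE unitfE; apply/negP => /det0P [v vn0 vS].
  have vT : v^T != 0.
    by apply: contra vn0 => /eqP h; rewrite -(trmxK v) h trmx0.
  have := pS _ vT; rewrite /qform trmxK vS mul0mx mxE ltxx.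
  done.
have GT : forall q (Y : 'M[R]_(n,q)), dot (G^T *m Y) (G^T *m Y) <= b * dot Y Y.
  move=> q Y; set w := G^T *m Y.
  have e : dot w w = dot Y (G *m w) by rewrite dot_mull.
  have h1 := cs Y (G *m w); rewrite -e in h1.
  have h2 := GhiM _ w.
  have w0 := dot_ge0 w; have Y0 := dot_ge0 Y.
  have h3 := ler_wpM2l Y0 h2.
  apply: sq_le => //; first by rewrite mulr_ge0 // ltW.
  apply: (le_trans h1); apply: (le_trans h3); rewrite le_eqVlt; apply/orP; left.
  by apply/eqP; ring.
have Slam : forall q (X : 'M[R]_(K,q)), a / Num.sqrt b * dot X X <= dot X (S *m X).
  move=> q X.
  set q0 := dot X (S *m X); set s := dot (S *m X) (S *m X).
  set r := dot (S *m X) (S *m (S *m X)).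
  have h1 : dot X (S *m (S *m X)) = s by rewrite dot_mull sS.
  have h2 := @cs_form _ _ S X (S *m X) sS (psdM q); rewrite h1 in h2.
  have h3 := cs (S *m X) (S *m (S *m X)).
  have h4 := Shi _ (S *m X).
  have r0 : 0 <= r := psdM _ (S *m X).
  have q00 : 0 <= q0 := psdM _ X.
  have s0 : 0 <= s := dot_ge0 _.
  have X0 := dot_ge0 X.
  have h5 := Slo _ X.
  have rb0 : 0 < Num.sqrt b by rewrite sqrtr_gt0.
  have rb2 : Num.sqrt b ^+ 2 = b by rewrite sqr_sqrtr // ltW.
  have h6 : r <= Num.sqrt b * s.
    have h7 : r ^+ 2 <= (Num.sqrt b * s) ^+ 2.
      rewrite exprMn rb2.
      apply: (le_trans h3); apply: (le_trans (ler_wpM2l s0 h4)).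
      by rewrite le_eqVlt; apply/orP; left; apply/eqP; ring.
    have := mulr_ge0 (ltW rb0) s0; nra.
  have h8 : s <= q0 * Num.sqrt b.
    apply: sq_le => //; first by rewrite mulr_ge0 // ltW.
    apply: (le_trans h2); apply: (le_trans (ler_wpM2l q00 h6)).
    by rewrite le_eqVlt; apply/orP; left; apply/eqP; ring.
  rewrite mulrAC ler_pdivrMr //; exact: le_trans h5 h8.
have Si : forall q (Y : 'M[R]_(K,q)), dot (invmx S *m Y) (invmx S *m Y) <= a^-1 * dot Y Y.
  move=> q Y; set Z := invmx S *m Y.
  have e : S *m Z = Y.
    by rewrite /Z mulmxA (mulmxV Su) mul1mx.
  have := Slo _ Z; rewrite e => h.
  by rewrite mulrC ler_pdivlMr // mulrC.
by do 5 (split; first done).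
Qed.

End Aux.
Unset Implicit Arguments.
Theorem lemmaS5p4 (R : realType) (K : nat) (mlo mhi : R) :
  (1 <= K)%N -> 0 < mlo -> mlo <= mhi ->
  exists L1 L2 : R, 0 < L1 /\ 0 < L2 /\
    forall (n : nat) (G Gt : 'M[R]_(n, K)) (S St : 'M[R]_K),
      loewner_le (mlo%:M) ((n%:R)^-1 *: (G^T *m G)) ->
      loewner_le ((n%:R)^-1 *: (G^T *m G)) (mhi%:M) ->
      loewner_le (mlo%:M) ((n%:R)^-1 *: (Gt^T *m Gt)) ->
      loewner_le ((n%:R)^-1 *: (Gt^T *m Gt)) (mhi%:M) ->
      is_spd_sqrt (G^T *m G) S ->
      is_spd_sqrt (Gt^T *m Gt) St ->
      frob (invmx S - invmx St) <= L1 * (n%:R)^-1 * frob (G - Gt) /\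
      frob (G *m invmx S - Gt *m invmx St)
        <= L2 * (Num.sqrt (n%:R))^-1 * frob (G - Gt).
Proof.
move=> K1 m0 mm; have M0 : 0 < mhi by apply: lt_le_trans mm.
exists (mhi / mlo ^+ 2), (Num.sqrt (2 * (mlo^-1 + mhi ^+ 3 / mlo ^+ 4))).
split; first by rewrite divr_gt0 // exprn_gt0.
split.
  by rewrite sqrtr_gt0 mulr_gt0 // addr_gt0 ?invr_gt0 // divr_gt0 // exprn_gt0.
move=> n G Gt S St H1 H2 H3 H4 HS HSt.
have n0 : 0 < (n%:R : R).
  rewrite ltr0n lt0n; apply/negP => /eqP n00.
  move: H1 => [_ h]; have := h (const_mx 1).
  have e : (n%:R : R)^-1 = 0 by rewrite n00 invr0.
  rewrite e scale0r sub0r qformE mulNmx dotNr mul_scalar_mx dotZr dotE.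
  under eq_bigr do rewrite big_ord1 !mxE mulr1.
  rewrite sumr_const card_ord oppr_ge0 => h'.
  have : 0 < mlo * (K%:R : R) by rewrite mulr_gt0 // ltr0n.
  move=> hh; lra.
have [sS [Su [Gb [GT [Sl Si]]]]] := single n0 m0 M0 H1 H2 HS.
have [sSt [Stu [Gtb [GtT [Stl Sti]]]]] := single n0 m0 M0 H3 H4 HSt.
move: HS HSt => [_ SS] [_ StSt].
have nn0 : n%:R != 0 :> R by rewrite gt_eqF.
have a0 : 0 < n%:R * mlo by rewrite mulr_gt0.
have b0 : 0 < n%:R * mhi by rewrite mulr_gt0.
move: Gb GT Sl Si Gtb GtT Stl Sti.
set a := n%:R * mlo; set b := n%:R * mhi; set lam := a / Num.sqrt b.
move=> Gb GT Sl Si Gtb GtT Stl Sti.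
have lam0 : 0 < lam by rewrite divr_gt0 // sqrtr_gt0.
have lam2 : lam ^+ 2 = a ^+ 2 / b.
  by rewrite /lam expr_div_n sqr_sqrtr // ltW.
set E := G - Gt; set Xd := S - St.
have tB : E^T = G^T - Gt^T by apply/matrixP => i j; rewrite !mxE.
set D := G^T *m E + E^T *m Gt.
have eqD : S *m Xd + Xd *m St = D.
  rewrite /D /Xd tB /E mulmxBr mulmxBl SS StSt mulmxBr mulmxBl.
  by rewrite !addrA !subrK.
have i1 := Sl _ Xd.
have i2 := Stl _ Xd^T.
have hT : dot Xd (Xd *m St) = dot Xd^T (St *m Xd^T).
  by rewrite -dot_tr trmx_mul sSt.
rewrite dot_tr -hT in i2.
have hD : 2 * lam * dot Xd Xd <= dot Xd D.
  rewrite -eqD (dotDr Xd (S *m Xd)); lra.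
have X0 := dot_ge0 Xd.
have E0 := dot_ge0 E.
have hcs := cs Xd D.
have d2 : dot (E^T *m Gt) (E^T *m Gt) = dot (Gt^T *m E) (Gt^T *m E).
  by rewrite -dot_tr trmx_mul trmxK.
have hDD : dot D D <= 4 * b * dot E E.
  apply: (le_trans (par _ _)); rewrite d2.
  have := GT _ E; have := GtT _ E; lra.
have hX : lam ^+ 2 * dot Xd Xd <= b * dot E E.
  have h0 : 0 <= 2 * lam * dot Xd Xd by rewrite mulr_ge0 // mulr_ge0 // ltW.
  have hsq : (2 * lam * dot Xd Xd) ^+ 2 <= dot Xd D ^+ 2 by nra.
  have h4 := ler_wpM2l X0 hDD.
  have : 4 * lam ^+ 2 * dot Xd Xd <= 4 * b * dot E E.
    apply: sq_le2 => //; first by rewrite mulr_gt0 // exprn_gt0.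
      by rewrite mulr_ge0 // mulr_ge0 // ltW.
    have chain := le_trans (le_trans hsq hcs) h4.
    move: chain; rewrite !exprMn => chain; lra.
  lra.
rewrite lam2 in hX.
have hX2 : dot Xd Xd <= b ^+ 2 / a ^+ 2 * dot E E.
  rewrite mulrAC ler_pdivlMr ?exprn_gt0 //.
  have := ler_wpM2l (ltW b0) hX.
  have -> : b * (a ^+ 2 / b * dot Xd Xd) = dot Xd Xd * a ^+ 2.
    by field; rewrite gt_eqF.
  move=> h; apply: (le_trans h); rewrite /b le_eqVlt; apply/orP; left; apply/eqP; ring.
set W := invmx S - invmx St.
have eW : W = invmx S *m ((St - S) *m invmx St).
  by rewrite mulmxBl (mulmxV Stu) mulmxBr mulmx1 mulmxA (mulVmx Su) mul1mx.
have hW : dot W W <= a^-1 * (a^-1 * dot Xd Xd).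
  rewrite eW; apply: (le_trans (Si _ _)); rewrite ler_pM2l ?invr_gt0 //.
  rewrite -dot_tr trmx_mul (trmx_inv St) sSt.
  apply: (le_trans (Sti _ _)); rewrite dot_tr -opprB dotNN.
  by [].
have c1 : a^-1 * (a^-1 * (b ^+ 2 / a ^+ 2 * dot E E)) = (mhi / mlo ^+ 2 * n%:R^-1) ^+ 2 * dot E E.
  rewrite /a /b; field; rewrite nn0 gt_eqF //.
have hW2 : dot W W <= (mhi / mlo ^+ 2 * n%:R^-1) ^+ 2 * dot E E.
  rewrite -c1; apply: (le_trans hW).
  by rewrite ler_pM2l ?invr_gt0 // ler_pM2l ?invr_gt0.
split.
  rewrite !frobE; apply: sqrt_bound => //.
  by rewrite mulr_ge0 ?invr_ge0 ?ler0n // divr_ge0 ?exprn_ge0 ?ltW.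
set V := G *m invmx S - Gt *m invmx St.
have eV : V = E *m invmx S + Gt *m W.
  by rewrite /V /E /W mulmxBl mulmxBr addrA subrK.
have v1 : dot (E *m invmx S) (E *m invmx S) <= a^-1 * dot E E.
  rewrite -dot_tr trmx_mul (trmx_inv S) sS.
  by apply: (le_trans (Si _ _)); rewrite dot_tr.
have v2 : dot (Gt *m W) (Gt *m W) <= b * ((mhi / mlo ^+ 2 * n%:R^-1) ^+ 2 * dot E E).
  apply: (le_trans (Gtb _ _)); by rewrite ler_pM2l.
have sn0 : 0 < Num.sqrt (n%:R : R) by rewrite sqrtr_gt0.
rewrite !frobE; apply: sqrt_bound => //.
  by rewrite mulr_ge0 ?invr_ge0 ?sqrtr_ge0 // ltW.
rewrite -/V eV; apply: (le_trans (par _ _)).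
have -> : (Num.sqrt (2 * (mlo^-1 + mhi ^+ 3 / mlo ^+ 4)) * (Num.sqrt n%:R)^-1) ^+ 2
   = 2 * (mlo^-1 + mhi ^+ 3 / mlo ^+ 4) / n%:R.
  rewrite exprMn exprVn !sqr_sqrtr ?ler0n //.
  apply: mulr_ge0 => //; apply: addr_ge0; first by rewrite invr_ge0 ltW.
  by apply: divr_ge0; apply: exprn_ge0; apply: ltW.
have -> : 2 * (mlo^-1 + mhi ^+ 3 / mlo ^+ 4) / n%:R * dot E E
   = 2 * (a^-1 * dot E E) + 2 * (b * ((mhi / mlo ^+ 2 * n%:R^-1) ^+ 2 * dot E E)).
  rewrite /a /b; field; rewrite nn0 gt_eqF //.
lra.
Qed.
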